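(* A complete theory $T$ has a non-aritizable expansion if and only if $T$ has an infinite model.
   Context: An expansion of $T$ is a complete theory $T'\supseteq T$ in a language containing that of $T$. For $n\geq1$ a theory $T'$ is $n$-ary if every $T'$-formula is $T'$-equivalent to a Boolean combination of $T'$-formulas with at most $n$ free variables (for $n=1$: formulas with one free variable and formulas $x\approx y$). A theory is $n$-aritizable if it has an $n$-ary expansion, and aritizable if it is $n$-aritizable for some $n$; non-aritizable means not aritizable. *)

(* Defs.v *)
From mathcomp Require Import all_boot.
Set Implicit Arguments. Unset Strict Implicit. Unset Printing Implicit Defensive.

(* A first-order (one-sorted) language: function symbols (constants = arity 0)
   and relation symbols, each with an arity. Equality is built in. *)
Record language := Language {
  func : Type; rel : Type;
  farity : func -> nat; rarity : rel -> nat }.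

(* Terms, with variables x_0, x_1, ... indexed by nat (de Bruijn). *)
Inductive term (L : language) : Type :=
| var : nat -> term L
| app : forall f : func L, ('I_(farity f) -> term L) -> term L.

Inductive form (L : language) : Type :=
| feq : term L -> term L -> form L
| frel : forall r : rel L, ('I_(rarity r) -> term L) -> form L
| ffalse : form L
| fimp : form L -> form L -> form L
| fand : form L -> form L -> form L
| f_or : form L -> form L -> form L
| fall : form L -> form L      (* binds variable 0 *)
| fex : form L -> form L.      (* binds variable 0 *)

Arguments var {L}. Arguments ffalse {L}.

Definition fnot L (p : form L) := fimp p ffalse.
Definition fiff L (p q : form L) := fand (fimp p q) (fimp q p).

Fixpoint tfree L (i : nat) (t : term L) : Prop :=
  match t with
  | var j => i = j
  | app f args => exists k, tfree i (args k)
  end.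

Fixpoint ffree L (i : nat) (p : form L) : Prop :=
  match p with
  | feq t1 t2 => tfree i t1 \/ tfree i t2
  | frel r args => exists k, tfree i (args k)
  | ffalse => False
  | fimp p q | fand p q | f_or p q => ffree i p \/ ffree i q
  | fall p | fex p => ffree i.+1 p
  end.

Definition sentence L (p : form L) := forall i, ~ ffree i p.

Record structure (L : language) := Structure {
  dom :> Type;
  dom_inh : inhabited dom;
  fint : forall f : func L, ('I_(farity f) -> dom) -> dom;
  rint : forall r : rel L, ('I_(rarity r) -> dom) -> Prop }.

Definition scons (M : Type) (x : M) (e : nat -> M) : nat -> M :=
  fun i => match i with 0 => x | i'.+1 => e i' end.

Fixpoint teval L (M : structure L) (e : nat -> M) (t : term L) : M :=
  match t with
  | var i => e i
  | app f args => @fint L M f (fun k => teval e (args k))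
  end.

Fixpoint sat L (M : structure L) (e : nat -> M) (p : form L) : Prop :=
  match p with
  | feq t1 t2 => teval e t1 = teval e t2
  | frel r args => @rint L M r (fun k => teval e (args k))
  | ffalse => False
  | fimp p q => sat e p -> sat e q
  | fand p q => sat e p /\ sat e q
  | f_or p q => sat e p \/ sat e q
  | fall p => forall x : M, sat (scons x e) p
  | fex p => exists x : M, sat (scons x e) p
  end.

Definition theory (L : language) := form L -> Prop.

Definition models L (M : structure L) (T : theory L) :=
  forall p, T p -> forall e : nat -> M, sat e p.

(* T |= p (p holds under every assignment in every model of T, i.e. T |= the
   universal closure of p). *)
Definition consequence L (T : theory L) (p : form L) :=
  forall M : structure L, models M T -> forall e : nat -> M, sat e p.

Definition complete L (T : theory L) :=
  [/\ forall p, T p -> sentence p,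
      exists M : structure L, models M T &
      forall p, sentence p -> consequence T p \/ consequence T (fnot p)].

Definition Lsum (L E : language) : language :=
  {| func := (func L + func E)%type; rel := (rel L + rel E)%type;
     farity := fun s => match s with inl f => farity f | inr g => farity g end;
     rarity := fun s => match s with inl r => rarity r | inr r => rarity r end |}.

Fixpoint ttr L E (t : term L) : term (Lsum L E) :=
  match t with
  | var i => var i
  | app f args => @app (Lsum L E) (inl f) (fun k => ttr E (args k))
  end.

Fixpoint ftr L E (p : form L) : form (Lsum L E) :=
  match p with
  | feq t1 t2 => feq (ttr E t1) (ttr E t2)
  | frel r args => @frel (Lsum L E) (inl r) (fun k => ttr E (args k))
  | ffalse => ffalse
  | fimp p q => fimp (ftr E p) (ftr E q)
  | fand p q => fand (ftr E p) (ftr E q)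
  | f_or p q => f_or (ftr E p) (ftr E q)
  | fall p => fall (ftr E p)
  | fex p => fex (ftr E p)
  end.

Definition expansion L E (T : theory L) (T' : theory (Lsum L E)) :=
  complete T' /\ forall p, T p -> consequence T' (ftr E p).

Definition atmost_free L (n : nat) (p : form L) :=
  exists s : seq nat, size s <= n /\ forall i, ffree i p -> i \in s.

Definition nbasic L (n : nat) (p : form L) :=
  atmost_free n p \/ exists i j, p = feq (var i) (var j).

Inductive boolcomb L (P : form L -> Prop) : form L -> Prop :=
| bc_base p : P p -> boolcomb P p
| bc_false : boolcomb P ffalse
| bc_imp p q : boolcomb P p -> boolcomb P q -> boolcomb P (fimp p q)
| bc_and p q : boolcomb P p -> boolcomb P q -> boolcomb P (fand p q)
| bc_or p q : boolcomb P p -> boolcomb P q -> boolcomb P (f_or p q).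

Definition nary L (n : nat) (T : theory L) :=
  forall p : form L, exists q : form L,
    [/\ boolcomb (nbasic n) q,
        forall i, ffree i q -> ffree i p &
        consequence T (fiff p q)].

Definition aritizable L (T : theory L) :=
  exists n, 0 < n /\
    exists (E : language) (T' : theory (Lsum L E)), expansion T T' /\ nary n T'.

Definition infinite_type (M : Type) := forall s : seq M, exists x : M, forall k, k < size s -> nth x s k <> x.

(* Main.v *)
Require Import Defs.
From mathcomp Require Import all_boot.
From Stdlib Require Import Classical ClassicalEpsilon FunctionalExtensionality Lia.
From mathcomp Require Import zify.
Require Import Defs.
Set Implicit Arguments. Unset Strict Implicit. Unset Printing Implicit Defensive.

Definition b2 (P : Prop) : bool := if excluded_middle_informative P then true else false.
Lemma b2P P : reflect P (b2 P).
Proof. rewrite /b2; case: excluded_middle_informative => h; by constructor. Qed.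
Lemma b2E P Q : (P <-> Q) -> b2 P = b2 Q.
Proof. move=> h; apply/idP/idP => /b2P H; apply/b2P; tauto. Qed.

Section Gen.
Variable L : language.

Lemma teval_ext (M : structure L) (e e' : nat -> M) (t : term L) :
  (forall i, tfree i t -> e i = e' i) -> teval e t = teval e' t.
Proof.
elim: t => [i|f args IH] /= H; first by apply: H.
congr (fint _); apply: functional_extensionality => k; apply: IH => i Hi.
by apply: H; exists k.
Qed.

Lemma sat_ext (M : structure L) (p : form L) (e e' : nat -> M) :
  (forall i, ffree i p -> e i = e' i) -> (sat e p <-> sat e' p).
Proof.
elim: p e e' => /=.
- move=> t1 t2 e e' H; rewrite (teval_ext (e':=e') (t:=t1)) ?(teval_ext (e':=e') (t:=t2)) //; move=> i Hi; apply: H; tauto.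
- move=> r args e e' H; have -> : (fun k => teval e (args k)) = (fun k => teval e' (args k)) => //.
  apply: functional_extensionality => k; apply: teval_ext => i Hi; apply: H; by exists k.
- done.
- move=> p IHp q IHq e e' H; rewrite (IHp e e') ?(IHq e e') //; move=> i Hi; apply: H; tauto.
- move=> p IHp q IHq e e' H; rewrite (IHp e e') ?(IHq e e') //; move=> i Hi; apply: H; tauto.
- move=> p IHp q IHq e e' H; rewrite (IHp e e') ?(IHq e e') //; move=> i Hi; apply: H; tauto.
- move=> p IHp e e' H; split=> h x; [rewrite -(IHp (scons x e)) // | rewrite (IHp _ (scons x e')) //];
  (case=> [|i] //= Hi; by rewrite H).
- move=> p IHp e e' H; split=> -[x h]; exists x; [rewrite -(IHp (scons x e)) // | rewrite (IHp _ (scons x e')) //];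
  (case=> [|i] //= Hi; by rewrite H).
Qed.

Lemma sentence_sat (M : structure L) (p : form L) (e e' : nat -> M) :
  sentence p -> (sat e p <-> sat e' p).
Proof. move=> Hs; apply: sat_ext => i Hi; by case: (Hs i). Qed.

Definition up (s : nat -> nat) i := match i with 0 => 0 | i'.+1 => (s i').+1 end.
Fixpoint trn (s : nat -> nat) (t : term L) : term L :=
  match t with var i => var (s i) | app f args => app (fun k => trn s (args k)) end.
Fixpoint frn (s : nat -> nat) (p : form L) : form L :=
  match p with
  | feq t1 t2 => feq (trn s t1) (trn s t2)
  | frel r args => frel (fun k => trn s (args k))
  | ffalse => ffalse
  | fimp p q => fimp (frn s p) (frn s q)
  | fand p q => fand (frn s p) (frn s q)
  | f_or p q => f_or (frn s p) (frn s q)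
  | fall p => fall (frn (up s) p)
  | fex p => fex (frn (up s) p)
  end.

Lemma teval_rn (M : structure L) (e : nat -> M) s t : teval e (trn s t) = teval (e \o s) t.
Proof.
elim: t => [i|f args IH] //=; congr (fint _); apply: functional_extensionality => k; exact: IH.
Qed.

Lemma scons_up (M : Type) (x : M) e s : (scons x e) \o up s = scons x (e \o s).
Proof. by apply: functional_extensionality; case. Qed.

Lemma sat_rn (M : structure L) p (e : nat -> M) s : sat e (frn s p) <-> sat (e \o s) p.
Proof.
elim: p e s => /=.
- by move=> t1 t2 e s; rewrite !teval_rn.
- move=> r args e s; have -> // : (fun k => teval e (trn s (args k))) = (fun k => teval (e \o s) (args k)).
  apply: functional_extensionality => k; exact: teval_rn.
- done.
- move=> p IHp q IHq e s; rewrite IHp IHq; tauto.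
- move=> p IHp q IHq e s; rewrite IHp IHq; tauto.
- move=> p IHp q IHq e s; rewrite IHp IHq; tauto.
- move=> p IHp e s; split=> h x.
  + have := proj1 (IHp _ _) (h x); by rewrite scons_up.
  + apply/IHp; rewrite scons_up; exact: h.
- move=> p IHp e s; split=> -[x h]; exists x.
  + have := proj1 (IHp _ _) h; by rewrite scons_up.
  + apply/IHp; by rewrite scons_up.
Qed.

Lemma tfree_rn s t k : tfree k (trn s t) <-> exists i, tfree i t /\ s i = k.
Proof.
elim: t => [i|f args IH] /=.
- split; [move=> ->; by exists i | by case=> j [-> ->]].
- split; [case=> o /IH [i [Hi Hs]]; exists i; split=> //; by exists o
         | case=> i [[o Ho] Hs]; exists o; apply/IH; by exists i].
Qed.

Lemma ffree_rn p s k : ffree k (frn s p) <-> exists i, ffree i p /\ s i = k.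
Proof.
elim: p s k => /=.
- move=> t1 t2 s k; rewrite !tfree_rn; split.
  + by case=> -[i [Hi Hs]]; exists i; split=> //; [left|right].
  + by case=> i [[Hi|Hi] Hs]; [left|right]; exists i.
- move=> r args s k; split.
  + by case=> o /tfree_rn [i [Hi Hs]]; exists i; split=> //; exists o.
  + by case=> i [[o Ho] Hs]; exists o; apply/tfree_rn; exists i.
- by move=> s k; split; [|case=> i []].
- move=> p IHp q IHq s k; rewrite IHp IHq; split.
  + by case=> -[i [Hi Hs]]; exists i; split=> //; [left|right].
  + by case=> i [[Hi|Hi] Hs]; [left|right]; exists i.
- move=> p IHp q IHq s k; rewrite IHp IHq; split.
  + by case=> -[i [Hi Hs]]; exists i; split=> //; [left|right].
  + by case=> i [[Hi|Hi] Hs]; [left|right]; exists i.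
- move=> p IHp q IHq s k; rewrite IHp IHq; split.
  + by case=> -[i [Hi Hs]]; exists i; split=> //; [left|right].
  + by case=> i [[Hi|Hi] Hs]; [left|right]; exists i.
- move=> p IHp s k; rewrite IHp; split.
  + by case=> -[|i] [Hi //= [<-]]; exists i.
  + by case=> i [Hi <-]; exists i.+1.
- move=> p IHp s k; rewrite IHp; split.
  + by case=> -[|i] [Hi //= [<-]]; exists i.
  + by case=> i [Hi <-]; exists i.+1.
Qed.


Definition envapp (M : Type) k (g e : nat -> M) i := if i < k then g i else e (i - k).

Lemma envapp_lt (M : Type) k (g e : nat -> M) i : i < k -> envapp k g e i = g i.
Proof. by rewrite /envapp => ->. Qed.
Lemma envapp_ge (M : Type) k (g e : nat -> M) i : envapp k g e (k + i) = e i.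
Proof. by rewrite /envapp ltnNge leq_addr /= addKn. Qed.

Lemma envapp_scons (M : Type) k (g e : nat -> M) x :
  envapp k g (scons x e) = envapp k.+1 (fun i => if i < k then g i else x) e.
Proof.
apply: functional_extensionality => i; rewrite /envapp.
case: (ltngtP i k) => H /=.
- by rewrite ltnS ltnW.
- rewrite ltnNge H /=.
  by case: i H => // i H; rewrite subSn.
- by rewrite H ltnSn subnn.
Qed.

Lemma envapp_ext (M : Type) k (g g' e : nat -> M) :
  (forall i, i < k -> g i = g' i) -> envapp k g e = envapp k g' e.
Proof. move=> H; apply: functional_extensionality => i; rewrite /envapp; case: ifP => // /H; done. Qed.

Lemma sat_iter_ex (M : structure L) k p (e : nat -> M) :
  sat e (iter k (@fex L) p) <-> exists g, sat (envapp k g e) p.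
Proof.
elim: k e => [|k IH] e /=.
- have E : forall g, envapp 0 g e = e.
    by move=> g; apply: functional_extensionality => i; rewrite /envapp subn0.
  split; [move=> h; exists e; by rewrite E | by case=> g; rewrite E].
- split.
  + case=> x /IH [g]; rewrite envapp_scons => h; by eexists; apply: h.
  + case=> g h; exists (g k); apply/IH; exists g; rewrite envapp_scons.
    rewrite (envapp_ext (g' := g)) // => i Hi; case: ifP => //; rewrite ltnS in Hi.
    move/negbT; rewrite -leqNgt => Hk; congr g; apply/eqP; by rewrite eqn_leq Hk Hi.
Qed.

Lemma sat_iter_all (M : structure L) k p (e : nat -> M) :
  sat e (iter k (@fall L) p) <-> forall g, sat (envapp k g e) p.
Proof.
elim: k e => [|k IH] e /=.
- have E : forall g, envapp 0 g e = e.
    by move=> g; apply: functional_extensionality => i; rewrite /envapp subn0.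
  split; [move=> h g; by rewrite E | move=> h; have := h e; by rewrite E].
- split.
  + move=> h g; have := proj1 (IH _) (h (g k)) g; rewrite envapp_scons.
    rewrite (envapp_ext (g' := g)) // => i Hi; case: ifP => //; rewrite ltnS in Hi.
    move/negbT; rewrite -leqNgt => Hk; congr g; apply/eqP; by rewrite eqn_leq Hk Hi.
  + move=> h x; apply/IH => g; rewrite envapp_scons; exact: h.
Qed.

Lemma ffree_iter_ex k p i : ffree i (iter k (@fex L) p) <-> ffree (i + k) p.
Proof. elim: k i => [|k IH] i /=; first by rewrite addn0. by rewrite IH addSnnS. Qed.
Lemma ffree_iter_all k p i : ffree i (iter k (@fall L) p) <-> ffree (i + k) p.
Proof. elim: k i => [|k IH] i /=; first by rewrite addn0. by rewrite IH addSnnS. Qed.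

Definition ftrue : form L := fimp ffalse ffalse.
Definition conjs (l : seq (form L)) := foldr (@fand L) ftrue l.
Definition disjs (l : seq (form L)) := foldr (@f_or L) ffalse l.

Lemma sat_conjs (T : eqType) (s : seq T) f (M : structure L) (e : nat -> M) :
  sat e (conjs (map f s)) <-> forall x, x \in s -> sat e (f x).
Proof.
elim: s => [|a s IH] /=; first by split.
rewrite IH; split.
- by case=> h1 h2 x; rewrite in_cons => /orP [/eqP ->|/h2].
- by move=> h; split=> [|x Hx]; apply: h; rewrite in_cons ?eqxx ?Hx ?orbT.
Qed.

Lemma sat_disjs (T : eqType) (s : seq T) f (M : structure L) (e : nat -> M) :
  sat e (disjs (map f s)) <-> exists2 x, x \in s & sat e (f x).
Proof.
elim: s => [|a s IH] /=; first by split=> // -[].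
rewrite IH; split.
- case=> [h|[x h1 h2]]; [exists a; rewrite ?in_cons ?eqxx // | exists x; rewrite ?in_cons ?h1 ?orbT //].
- case=> x; rewrite in_cons => /orP [/eqP ->|h1] h2; [by left|right; by exists x].
Qed.

Lemma ffree_conjs (T : eqType) (s : seq T) f i :
  ffree i (conjs (map f s)) <-> exists2 x, x \in s & ffree i (f x).
Proof.
elim: s => [|a s IH] /=; first by split=> [[]|[]] //.
rewrite IH; split.
- case=> [h|[x h1 h2]]; [exists a; rewrite ?in_cons ?eqxx // | exists x; rewrite ?in_cons ?h1 ?orbT //].
- case=> x; rewrite in_cons => /orP [/eqP ->|h1] h2; [by left|right; by exists x].
Qed.

Lemma ffree_disjs (T : eqType) (s : seq T) f i :
  ffree i (disjs (map f s)) <-> exists2 x, x \in s & ffree i (f x).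
Proof.
elim: s => [|a s IH] /=; first by split=> [[]|[]] //.
rewrite IH; split.
- case=> [h|[x h1 h2]]; [exists a; rewrite ?in_cons ?eqxx // | exists x; rewrite ?in_cons ?h1 ?orbT //].
- case=> x; rewrite in_cons => /orP [/eqP ->|h1] h2; [by left|right; by exists x].
Qed.

Lemma bc_disjs (T : eqType) (s : seq T) f (P : form L -> Prop) :
  (forall x, x \in s -> boolcomb P (f x)) -> boolcomb P (disjs (map f s)).
Proof.
elim: s => [|a s IH] /= H; first exact: bc_false.
apply: bc_or; [apply: H; by rewrite in_cons eqxx | apply: IH => x Hx; apply: H; by rewrite in_cons Hx orbT].
Qed.

Definition dpairs k := [seq ab <- [seq (a, b) | a <- iota 0 k, b <- iota 0 k] | ab.1 != ab.2].
Lemma mem_dpairs k a b : ((a, b) \in dpairs k) = [&& a < k, b < k & a != b].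
Proof.
rewrite mem_filter /=; case: (a != b); rewrite ?andbF ?andbT //.
apply/allpairsP/andP => [[[x y] [Hx Hy [-> ->]]]|[Ha Hb]].
- by move: Hx Hy; rewrite !mem_iota.
- by exists (a, b); rewrite !mem_iota.
Qed.

Definition distinct k : form L := conjs [seq fnot (feq (var ab.1) (var ab.2)) | ab <- dpairs k].

Lemma sat_distinct (M : structure L) (e : nat -> M) k :
  sat e (distinct k) <-> forall a b, a < k -> b < k -> a != b -> e a <> e b.
Proof.
rewrite /distinct sat_conjs; split.
- move=> h a b Ha Hb Hab; apply: (h (a, b)); by rewrite mem_dpairs Ha Hb.
- by move=> h [a b]; rewrite mem_dpairs => /and3P [Ha Hb Hab]; apply: h.
Qed.

Lemma ffree_distinct k i : ffree i (distinct k) -> i < k.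
Proof.
rewrite /distinct ffree_conjs => -[[a b]]; rewrite mem_dpairs => /and3P [Ha Hb _] /=.
by case=> [[->|->]|].
Qed.

Definition sigma k := iter k (@fex L) (distinct k).

Lemma sat_sigma (M : structure L) (e : nat -> M) k :
  sat e (sigma k) <-> exists g : nat -> M, forall a b, a < k -> b < k -> a != b -> g a <> g b.
Proof.
rewrite /sigma sat_iter_ex; split; case=> g; [rewrite sat_distinct|] => h; exists g.
- by move=> a b Ha Hb; rewrite -(envapp_lt g e Ha) -(envapp_lt g e Hb); apply: h.
- apply/sat_distinct => a b Ha Hb; rewrite (envapp_lt g e Ha) (envapp_lt g e Hb); exact: h.
Qed.

Lemma sentence_sigma k : sentence (sigma k).
Proof. move=> i; rewrite /sigma ffree_iter_ex => /ffree_distinct; by rewrite ltnNge leq_addl. Qed.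

Definition Th (X : structure L) : theory L := fun p => sentence p /\ forall e : nat -> X, sat e p.

Lemma Th_complete (X : structure L) : complete (Th X).
Proof.
split.
- by move=> p [].
- by exists X => p [].
- move=> p Hs; case: (classic (forall e : nat -> X, sat e p)) => H.
  + by left=> Y HY e; apply: (HY p (conj Hs H)).
  + right=> Y HY e; apply: (HY (fnot p)); split.
    * by move=> i /= [/Hs|].
    * move=> e' /= h; apply: H => e0; by rewrite (sentence_sat e0 e' Hs).
Qed.

End Gen.

Arguments ftrue {L}.

Section Red.
Variables L E : language.

Definition reduct (N : structure (Lsum L E)) : structure L :=
  @Structure L (dom N) (dom_inh N) (fun f args => @fint _ N (inl f) args)
    (fun r args => @rint _ N (inl r) args).

Lemma teval_reduct (N : structure (Lsum L E)) (e : nat -> N) t :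
  teval e (ttr E t) = teval (M := reduct N) e t.
Proof.
elim: t => [i|f args IH] //=; congr (fint _); apply: functional_extensionality => k; exact: IH.
Qed.

Lemma sat_reduct (N : structure (Lsum L E)) p (e : nat -> N) :
  sat e (ftr E p) <-> sat (M := reduct N) e p.
Proof.
elim: p e => /=.
- by move=> t1 t2 e; rewrite !teval_reduct.
- move=> r args e; have -> // : (fun k => teval e (ttr E (args k))) = (fun k => teval (M := reduct N) e (args k)).
  apply: functional_extensionality => k; exact: teval_reduct.
- done.
- move=> p IHp q IHq e; rewrite IHp IHq; tauto.
- move=> p IHp q IHq e; rewrite IHp IHq; tauto.
- move=> p IHp q IHq e; rewrite IHp IHq; tauto.
- move=> p IHp e; split=> h x; [apply/IHp|apply/IHp]; exact: h.
- move=> p IHp e; split=> -[x h]; exists x; [apply/IHp|apply/IHp]; exact: h.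
Qed.

Lemma tfree_ttr (t : term L) i : tfree i (ttr E t) <-> tfree i t.
Proof.
elim: t i => [j|f args IH] i //=; split; case=> k h; exists k; by apply/IH.
Qed.

Lemma ffree_ftr (p : form L) i : ffree i (ftr E p) <-> ffree i p.
Proof.
elim: p i => /=.
- by move=> t1 t2 i; rewrite !tfree_ttr.
- by move=> r args i; split; case=> k h; exists k; move: h; rewrite tfree_ttr.
- done.
- move=> p IHp q IHq i; rewrite IHp IHq; tauto.
- move=> p IHp q IHq i; rewrite IHp IHq; tauto.
- move=> p IHp q IHq i; rewrite IHp IHq; tauto.
- by move=> p IHp i; rewrite IHp.
- by move=> p IHp i; rewrite IHp.
Qed.

Lemma sentence_ftr (p : form L) : sentence p -> sentence (ftr E p).
Proof. by move=> H i /ffree_ftr /H. Qed.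

Definition expand (N : structure L) (fE : forall g : func E, ('I_(farity g) -> N) -> N)
  (rE : forall r : Defs.rel E, ('I_(rarity r) -> N) -> Prop) : structure (Lsum L E) :=
  @Structure (Lsum L E) (dom N) (dom_inh N)
   (fun s => match s as s0 return ('I_(@farity (Lsum L E) s0) -> N) -> N with
             | inl f => fun args => @fint _ N f args | inr g => fun args => fE g args end)
   (fun s => match s as s0 return ('I_(@rarity (Lsum L E) s0) -> N) -> Prop with
             | inl r => fun args => @rint _ N r args | inr r => fun args => rE r args end).

Lemma teval_expand (N : structure L) fE rE (e : nat -> N) t :
  teval (M := expand fE rE) e (ttr E t) = teval e t.
Proof.
elim: t => [i|f args IH] //=; congr (fint _); apply: functional_extensionality => k; exact: IH.
Qed.

Lemma sat_expand (N : structure L) fE rE p (e : nat -> N) :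
  sat (M := expand fE rE) e (ftr E p) <-> sat e p.
Proof.
elim: p e => /=.
- by move=> t1 t2 e; rewrite !teval_expand.
- move=> r args e; have -> // : (fun k => teval (M := expand fE rE) e (ttr E (args k))) = (fun k => teval e (args k)).
  apply: functional_extensionality => k; exact: teval_expand.
- done.
- move=> p IHp q IHq e; rewrite IHp IHq; tauto.
- move=> p IHp q IHq e; rewrite IHp IHq; tauto.
- move=> p IHp q IHq e; rewrite IHp IHq; tauto.
- move=> p IHp e; split=> h x; [apply/IHp|apply/IHp]; exact: h.
- move=> p IHp e; split=> -[x h]; exists x; [apply/IHp|apply/IHp]; exact: h.
Qed.

End Red.

Section Bounded.
Variable L : language.

Lemma finite_tfree (t : term L) : exists s : seq nat, forall i, tfree i t -> i \in s.
Proof.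
elim: t => [j|f args IH]; first by exists [:: j] => i /= ->; rewrite inE.
pose sf := fun k => proj1_sig (constructive_indefinite_description _ (IH k)).
exists (flatten [seq sf k | k <- enum 'I_(farity f)]) => i /= [k Hk].
apply/flattenP; exists (sf k); first by apply: map_f; rewrite mem_enum.
exact: (proj2_sig (constructive_indefinite_description _ (IH k))).
Qed.

Lemma finite_ffree (p : form L) : exists s : seq nat, forall i, ffree i p -> i \in s.
Proof.
elim: p.
- move=> t1 t2; case: (finite_tfree t1) => s1 H1; case: (finite_tfree t2) => s2 H2.
  by exists (s1 ++ s2) => i /= [/H1|/H2] h; rewrite mem_cat h ?orbT.
- move=> r args.
  have IH : forall k, exists s : seq nat, forall i, tfree i (args k) -> i \in s by move=> k; exact: finite_tfree.
  pose sf := fun k => proj1_sig (constructive_indefinite_description _ (IH k)).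
  exists (flatten [seq sf k | k <- enum 'I_(rarity r)]) => i /= [k Hk].
  apply/flattenP; exists (sf k); first by apply: map_f; rewrite mem_enum.
  exact: (proj2_sig (constructive_indefinite_description _ (IH k))).
- by exists [::].
- move=> p [s1 H1] q [s2 H2]; by exists (s1 ++ s2) => i /= [/H1|/H2] h; rewrite mem_cat h ?orbT.
- move=> p [s1 H1] q [s2 H2]; by exists (s1 ++ s2) => i /= [/H1|/H2] h; rewrite mem_cat h ?orbT.
- move=> p [s1 H1] q [s2 H2]; by exists (s1 ++ s2) => i /= [/H1|/H2] h; rewrite mem_cat h ?orbT.
- move=> p [s H]; exists [seq i.-1 | i <- s] => i /= /H h; by apply/mapP; exists i.+1.
- move=> p [s H]; exists [seq i.-1 | i <- s] => i /= /H h; by apply/mapP; exists i.+1.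
Qed.

Lemma exact_ffree (p : form L) : exists F : seq nat, uniq F /\ forall i, ffree i p <-> i \in F.
Proof.
case: (finite_ffree p) => s Hs; exists [seq i <- undup s | b2 (ffree i p)]; split.
- by rewrite filter_uniq ?undup_uniq.
- move=> i; rewrite mem_filter mem_undup; split.
  + by move=> h; rewrite (Hs _ h) andbT; apply/b2P.
  + by case/andP => /b2P.
Qed.

Definition swapv (i j : nat) := fun k => if k == j then i else k.

Lemma bounded_nary (U : theory L) n :
  (forall N : structure L, models N U -> forall g : nat -> N, exists a b, [/\ a < b, b <= n & g a = g b]) ->
  nary n U.
Proof.
move=> Hb p.
case: (exact_ffree p) => F [HuF HF].
suff: forall m (p : form L) F, size F <= m -> uniq F -> (forall i, ffree i p <-> i \in F) ->
  exists q, [/\ boolcomb (nbasic n) q, forall i, ffree i q -> ffree i p & consequence U (fiff p q)].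
  by move=> H; exact: (H _ p F (leqnn _) HuF HF).
clear p F HuF HF.
elim=> [|m IH] p F Hsz Hu HF.
all: case: (leqP (size F) n) => Hn.
1,3: exists p; split=> //; [apply: bc_base; left; exists F; split=> // i; by rewrite -HF
                           | by move=> N HN e /=; split].
- by move: Hsz; rewrite leqn0 => /eqP Hs; rewrite Hs in Hn.
pose ps := [seq ij <- [seq (i, j) | i <- F, j <- F] | ij.1 != ij.2].
have Hps : forall i j, ((i, j) \in ps) = [&& i \in F, j \in F & i != j].
  move=> i j; rewrite mem_filter /=; case: (i != j); rewrite ?andbF ?andbT //.
  apply/allpairsP/andP => [[[x y] [Hx Hy [-> ->]]]|[Ha Hb']]; first by [].
  by exists (i, j).
have Hch : forall ij : nat * nat, exists q, ij \in ps ->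
   [/\ boolcomb (nbasic n) q, forall k, ffree k q -> ffree k (frn (swapv ij.1 ij.2) p)
     & consequence U (fiff (frn (swapv ij.1 ij.2) p) q)].
  move=> [i j]; case Hij: ((i, j) \in ps); last by exists ffalse.
  move: Hij; rewrite Hps => /and3P [Hi Hj Hne].
  have [q Hq] : exists q, [/\ boolcomb (nbasic n) q, forall k, ffree k q -> ffree k (frn (swapv i j) p)
     & consequence U (fiff (frn (swapv i j) p) q)].
    apply: (IH _ [seq k <- F | k != j]).
    - rewrite size_filter -ltnS; apply: leq_trans Hsz.
      rewrite -(count_predC (pred1 j)) -addn1 addnC leq_add2r.
      by rewrite count_uniq_mem // Hj.
    - exact: filter_uniq.
    - move=> k; rewrite ffree_rn mem_filter; split.
      + case=> x [Hx <-]; case: (x =P j) => [Exj|/eqP Hxj].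
          by rewrite /swapv /= Exj eqxx Hne Hi.
        by rewrite /swapv /= (negbTE Hxj) Hxj -HF.
      + case/andP => Hkj Hk; exists k; split; first by apply/HF.
        by rewrite /swapv (negbTE Hkj).
  by exists q.
pose qf := fun ij => proj1_sig (constructive_indefinite_description _ (Hch ij)).
have Hqf : forall ij, ij \in ps -> _ := fun ij => proj2_sig (constructive_indefinite_description _ (Hch ij)).
exists (disjs [seq fand (feq (var ij.1) (var ij.2)) (qf ij) | ij <- ps]); split.
- apply: bc_disjs => -[i j] Hij; apply: bc_and; first by apply: bc_base; right; exists i, j.
  by case: (Hqf _ Hij).
- move=> k /ffree_disjs [[i j] Hij] /=; move: (Hij); rewrite Hps => /and3P [Hi Hj _].
  case=> [[|]|]; [move=> ->; exact/HF | move=> ->; exact/HF |].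
  case: (Hqf _ Hij) => _ H _ /H /ffree_rn [x [Hx <-]]; rewrite /swapv; case: eqP => // _; exact/HF.
- move=> N HN e /=.
  have key : forall i j, (i, j) \in ps -> e i = e j -> (sat e (qf (i, j)) <-> sat e p).
    move=> i j Hij Heq; case: (Hqf _ Hij) => _ _ /(_ N HN e) /= [h1 h2].
    have E : e \o swapv i j = e.
      by apply: functional_extensionality => k /=; rewrite /swapv; case: eqP => // ->.
    split=> h.
    - have := proj1 (sat_rn p e (swapv i j)) (h2 h); by rewrite E.
    - apply: h1; apply/(proj2 (sat_rn p e (swapv i j))); by rewrite E.
  split.
  + move=> hp; apply/sat_disjs.
    case: (Hb N HN (fun a => e (nth 0 F a))) => a [b [Hab Hbn Heq]].
    have HbF : b < size F by apply: leq_ltn_trans Hn.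
    have HaF : a < size F by apply: ltn_trans HbF.
    exists (nth 0 F a, nth 0 F b).
    * rewrite Hps !mem_nth //=; rewrite nth_uniq //; by rewrite neq_ltn Hab.
    * by split=> //; apply/key => //; rewrite Hps !mem_nth //= nth_uniq // neq_ltn Hab.
  + by case/sat_disjs => -[i j] Hij /= [Heq /key]; apply.
Qed.

End Bounded.

Lemma no_inj (M : Type) (s : seq M) :
  (forall x, exists k, k < size s /\ nth x s k = x) ->
  forall g : nat -> M, exists a b, [/\ a < b, b <= size s & g a = g b].
Proof.
move=> Hs g; apply: NNPP => Hn.
have Hd : forall a b, a <= size s -> b <= size s -> g a = g b -> a = b.
  move=> a b Ha Hb Hab; case: (ltngtP a b) => // H; exfalso; apply: Hn.
  - by exists a, b.
  - by exists b, a.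
have Hh : forall a : 'I_(size s).+1, exists k : 'I_(size s), nth (g a) s k = g a.
  move=> a; case: (Hs (g a)) => k [Hk H]; by exists (Ordinal Hk).
pose h := fun a => proj1_sig (constructive_indefinite_description _ (Hh a)).
have hP : forall a : 'I_(size s).+1, nth (g a) s (h a) = g a := fun a => proj2_sig (constructive_indefinite_description _ (Hh a)).
have hinj : injective h.
  move=> a b Hab; apply: val_inj; apply: Hd; rewrite -1?ltnS ?ltn_ord //.
  have := hP a; rewrite Hab (set_nth_default (g b)) ?ltn_ord // hP => <-; done.
by have := leq_card h hinj; rewrite !card_ord ltnn.
Qed.

Lemma bound_of_notsigma L (M : structure L) k :
  (forall e : nat -> M, sat e (fnot (sigma L k.+1))) ->
  forall g : nat -> M, exists a b, [/\ a < b, b <= k & g a = g b].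
Proof.
move=> H g; apply: NNPP => Hn; have H1 : sat g (sigma L k.+1) -> False := H g; apply: H1; apply/sat_sigma; exists g => a b Ha Hb Hab Heq.
case: (ltngtP a b) => Hc; last by rewrite Hc eqxx in Hab.
- by apply: Hn; exists a, b.
- by apply: Hn; exists b, a.
Qed.

Lemma notsigma_of_bound L (M : structure L) k :
  (forall g : nat -> M, exists a b, [/\ a < b, b <= k & g a = g b]) ->
  forall e : nat -> M, sat e (fnot (sigma L k.+1)).
Proof.
move=> H e; change (sat e (sigma L k.+1) -> False) => He; case: (proj1 (sat_sigma e _) He) => g Hg; case: (H g) => a [b [Hab Hb Heq]].
by apply: (Hg a b) => //; [apply: ltn_trans Hab _ | rewrite neq_ltn Hab].
Qed.

Definition E0 : language := {| func := void; rel := void;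
  farity := fun v => match v with end; rarity := fun v => match v with end |}.

Lemma dir1 (L : language) (T : theory L) (HT : complete T) (E : language) (T' : theory (Lsum L E)) :
  expansion T T' -> ~ aritizable T' -> exists M : structure L, models M T /\ infinite_type M.
Proof.
move=> [HT' HTT'] Hna; apply: NNPP => Hno.
case: HT => HTs [M HM] HTc.
have [s Hs] : exists s : seq M, forall x, exists k, k < size s /\ nth x s k = x.
  apply: NNPP => H1; apply: Hno; exists M; split=> // s; apply: NNPP => H2; apply: H1; exists s => x.
  apply: NNPP => H3; apply: H2; exists x => k Hk Heq; apply: H3; by exists k.
set n := size s.
have n_gt0 : 0 < n.
  case: (dom_inh M) => x0; case: (Hs x0) => k [Hk _]; exact: leq_ltn_trans Hk.
have HTsig : consequence T (fnot (sigma L n.+1)).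
  case: (HTc _ (@sentence_sigma L n.+1)) => // H.
  case: (dom_inh M) => x0; have := H M HM (fun _ => x0).
  case/sat_sigma => g Hg; case: (no_inj Hs g) => a [b [Hab Hb Heq]].
  by exfalso; apply: (Hg a b) => //; [apply: ltn_trans Hab _ | rewrite neq_ltn Hab].
case: HT' => HT's [N0 HN0] HT'c.
have HredT : models (reduct N0) T.
  by move=> p Hp e; apply/sat_reduct; apply: (HTT' p Hp N0 HN0).
have boundN0 := bound_of_notsigma (HTsig _ HredT).
pose X := expand (E := E0) (N := N0) (fun g => match g with end) (fun r => match r with end).
apply: Hna; exists n; split=> //; exists E0, (Th X); split.
- split; first exact: Th_complete.
  move=> p Hp Y HY e; apply: (HY (ftr E0 p)); split.
  + exact/sentence_ftr/HT's.
  + by move=> e'; apply/sat_expand; apply: (HN0 p Hp).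
- apply: bounded_nary => Y HY; apply: bound_of_notsigma => e; apply: (HY (fnot (sigma _ n.+1))); split.
  + move=> i; change (~ (ffree i (sigma (Lsum (Lsum L E) E0) n.+1) \/ False)); case=> [H|//]; exact: (@sentence_sigma _ _ i H).
  + apply: notsigma_of_bound; exact: boundN0.
Qed.

Lemma bc_cat_aux (L : language) (P : form L -> Prop) (r s phi : form L) l1 l2 :
  (forall i, ffree i phi <-> ffree i r \/ ffree i s) ->
  (forall (M : structure L) (e e' : nat -> M), (sat e r <-> sat e' r) -> (sat e s <-> sat e' s) -> (sat e phi <-> sat e' phi)) ->
  (forall j, j < size l1 -> P (nth ffalse l1 j) /\ forall i, ffree i (nth ffalse l1 j) -> ffree i r) ->
  (forall (M : structure L) (e e' : nat -> M),
     (forall j, j < size l1 -> (sat e (nth ffalse l1 j) <-> sat e' (nth ffalse l1 j))) -> (sat e r <-> sat e' r)) ->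
  (forall j, j < size l2 -> P (nth ffalse l2 j) /\ forall i, ffree i (nth ffalse l2 j) -> ffree i s) ->
  (forall (M : structure L) (e e' : nat -> M),
     (forall j, j < size l2 -> (sat e (nth ffalse l2 j) <-> sat e' (nth ffalse l2 j))) -> (sat e s <-> sat e' s)) ->
  exists l : seq (form L),
   (forall j, j < size l -> P (nth ffalse l j) /\ forall i, ffree i (nth ffalse l j) -> ffree i phi) /\
   forall (M : structure L) (e e' : nat -> M),
     (forall j, j < size l -> (sat e (nth ffalse l j) <-> sat e' (nth ffalse l j))) -> (sat e phi <-> sat e' phi).
Proof.
move=> Hf Hs H1 K1 H2 K2; exists (l1 ++ l2); split.
- move=> j; rewrite size_cat nth_cat => Hj; case: ifP => Hj1.
  + case: (H1 _ Hj1) => h1 h2; split=> // i /h2 h; apply/Hf; by left.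
  + have Hj2 : j - size l1 < size l2 by rewrite ltn_subLR // leqNgt Hj1.
    case: (H2 _ Hj2) => h1 h2; split=> // i /h2 h; apply/Hf; by right.
- move=> M e e' H; apply: Hs.
  + apply: K1 => j Hj; have := H j; rewrite size_cat nth_cat Hj; apply; exact: ltn_addr.
  + apply: K2 => j Hj; have := H (size l1 + j); rewrite size_cat nth_cat (ltnNge (size l1 + j) (size l1)) leq_addr addKn ltn_add2l; by apply.
Qed.

Lemma bc_list (L : language) (P : form L -> Prop) (q : form L) : boolcomb P q ->
  exists l : seq (form L),
   (forall j, j < size l -> P (nth ffalse l j) /\ forall i, ffree i (nth ffalse l j) -> ffree i q) /\
   forall (M : structure L) (e e' : nat -> M),
     (forall j, j < size l -> (sat e (nth ffalse l j) <-> sat e' (nth ffalse l j))) -> (sat e q <-> sat e' q).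
Proof.
elim=> [r Hr|| r s _ [l1 [H1 K1]] _ [l2 [H2 K2]] | r s _ [l1 [H1 K1]] _ [l2 [H2 K2]]
       | r s _ [l1 [H1 K1]] _ [l2 [H2 K2]]].
- exists [:: r]; split; first by case=> // _; split.
  by move=> M e e' H; apply: (H 0).
- by exists [::]; split.
all: apply: (bc_cat_aux (r := r) (s := s) _ _ H1 K1 H2 K2) => //= M e e' h1 h2; rewrite h1 h2; done.
Qed.

Lemma b2_xor (A B : Prop) : b2 (~ (A <-> B)) = b2 A (+) b2 B.
Proof.
case: (b2P A) => HA; case: (b2P B) => HB /=; apply/b2P; tauto.
Qed.

Section Counting.
Variables (L2 : language) (N : structure L2) (n' : nat).
Local Notation n := n'.+1.
Variables (PN QN : N -> Prop) (RN : ('I_n.+1 -> N) -> Prop).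

Definition tup (gz : nat -> N) (y : N) : 'I_n.+1 -> N := fun k => if val k < n then gz k else y.

Hypothesis HS1 : forall k, exists g : nat -> N,
  (forall a b, a < k -> b < k -> a != b -> g a <> g b) /\ forall i, i < k -> QN (g i) /\ ~ PN (g i).
Hypothesis HS2 : exists y, PN y.
Hypothesis HS3 : forall gx : nat -> N, (forall i, i < n -> QN (gx i)) -> forall y, PN y ->
  exists y', PN y' /\ forall gz, (RN (tup gz y') <-> ~ (RN (tup gz y) <-> forall i, i < n -> gz i = gx i)).
Variables (p q : form L2).
Hypothesis Hp : forall e : nat -> N, sat e p <-> RN (fun k => e (val k)).
Hypothesis Hfp : forall i, ffree i p -> i < n.+1.
Hypothesis Hbq : boolcomb (nbasic n) q.
Hypothesis Hfq : forall i, ffree i q -> ffree i p.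
Hypothesis Heq : forall e : nat -> N, sat e p <-> sat e q.

Lemma counting : False.
Proof.
case: (bc_list Hbq) => l [Hl Kl].
set m := size l; set k := m.+1.
case: (HS1 k) => a [Ha_inj Ha_Q].
case: HS2 => b0 Hb0.
pose X := {ffun 'I_n -> 'I_k}.
pose env (t : X) (b : N) : nat -> N := fun i => if i < n then a (t (inord i)) else b.
pose trace (b : N) : {ffun X -> bool} := [ffun t => b2 (RN (fun k => env t b (val k)))].
have a_inj : forall (x y : 'I_k), a x = a y -> x = y.
  move=> x y Hxy; apply: val_inj; apply/eqP; apply: contraT => Hne.
  by case: (Ha_inj x y (ltn_ord x) (ltn_ord y) Hne).
have flip : forall (t0 : X) b, PN b -> exists b', PN b' /\ forall t, trace b' t = trace b t (+) (t == t0).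
  move=> t0 b Hb.
  have HQ : forall i, i < n -> QN ((fun i => a (t0 (inord i))) i).
    by move=> i _; case: (Ha_Q (t0 (inord i))).
  case: (HS3 HQ Hb) => b' [Hb' Hfl]; exists b'; split=> // t.
  rewrite !ffunE.
  have -> : (fun k0 : 'I_n.+1 => env t b' k0) = tup (fun i => a (t (inord i))) b' by [].
  have -> : (fun k0 : 'I_n.+1 => env t b k0) = tup (fun i => a (t (inord i))) b by [].
  rewrite (b2E (Hfl _)) b2_xor; congr addb.
  apply/b2P/eqP.
  - move=> H; apply/ffunP => c; apply: a_inj; have := H c (ltn_ord c); by rewrite inord_val.
  - by move=> ->.
have all_tr : forall S : {ffun X -> bool}, exists b, PN b /\ trace b = S.
  have H : forall D : seq X, uniq D -> exists b, PN b /\ forall t, trace b t = trace b0 t (+) (t \in D).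
    elim=> [|t0 D IH] /=.
      by move=> _; exists b0; split=> // t; rewrite in_nil addbF.
    case/andP => Ht0 Hu; case: (IH Hu) => b [Hb Htr].
    case: (flip t0 b Hb) => b' [Hb' Htr']; exists b'; split=> // t.
    rewrite Htr' Htr in_cons -addbA; congr addb.
    case: (t =P t0) => [->|_] /=; first by rewrite (negbTE Ht0).
    by rewrite addbF.
  move=> S; case: (H (enum [pred t | S t != trace b0 t]) (enum_uniq _)) => b [Hb Htr].
  exists b; split=> //; apply/ffunP => t; rewrite Htr mem_enum inE.
  by case: (S t); case: (trace b0 t).
pose psi (j : nat) := nth ffalse l j.
have fv_psi : forall j, j < m -> forall i, ffree i (psi j) -> i < n.+1.
  move=> j Hj i Hi; apply: Hfp; apply: Hfq; by case: (Hl j Hj) => _ /(_ i Hi).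
pose c (j : nat) : 'I_n := odflt ord0 [pick c0 : 'I_n | ~~ b2 (ffree c0 (psi j))].
have cP : forall j, (exists c0 : 'I_n, ~ ffree c0 (psi j)) -> ~ ffree (c j) (psi j).
  move=> j0 [c0 Hc0]; rewrite /c; case: pickP => [c1 /negP Hc1|Hnone] /=.
  - by move=> H; apply: Hc1; apply/b2P.
  - by move: (Hnone c0) => /= /negbFE /b2P.
pose caseB (j : nat) := b2 (ffree n (psi j)) && ~~ b2 (ffree (c j) (psi j)).
pose ext (c0 : 'I_n) (u : {ffun 'I_n' -> 'I_k}) : X := [ffun i => if unlift c0 i is Some i' then u i' else ord0].
pose proj (c0 : 'I_n) (t : X) : {ffun 'I_n' -> 'I_k} := [ffun i' => t (lift c0 i')].
have ext_proj : forall c0 t i, i != c0 -> ext c0 (proj c0 t) i = t i.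
  move=> c0 t i Hi; rewrite !ffunE; case: unliftP => [i' Ei|Ei].
  - by rewrite ffunE Ei.
  - by rewrite Ei eqxx in Hi.
pose data (b : N) : {ffun 'I_m * {ffun 'I_n' -> 'I_k} -> bool} :=
  [ffun ju : 'I_m * {ffun 'I_n' -> 'I_k} => caseB (nat_of_ord ju.1) && b2 (sat (env (ext (c (nat_of_ord ju.1)) ju.2) b) (psi (nat_of_ord ju.1)))].
have PnotQ : forall t (i : nat), i < n -> forall b, PN b -> env t b i <> b.
  move=> t i Hi b Hb; rewrite /env Hi => E.
  by case: (Ha_Q _ (ltn_ord (t (inord i)))) => _; apply; rewrite E.
have b2_iff : forall A B : Prop, b2 A = b2 B -> (A <-> B).
  by move=> A B; case: (b2P A); case: (b2P B).
have key : forall b b', PN b -> PN b' -> data b = data b' -> trace b = trace b'.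
  move=> b b' Hb Hb' Hd; apply/ffunP => t; rewrite !ffunE; apply: b2E.
  suff E : sat (env t b) q <-> sat (env t b') q.
    by rewrite -(Hp (env t b)) -(Hp (env t b')) !Heq.
  apply: Kl => j Hj; have Hfj := fv_psi j Hj.
  case: (classic (ffree n (psi j))) => Hn; last first.
    apply: sat_ext => i Hi; have Hi1 := Hfj i Hi.
    have Hin : i < n.
      by move: Hi1; rewrite ltnS leq_eqVlt => /orP [/eqP E|//]; rewrite E in Hi.
    by rewrite /env Hin.
  case: (classic (exists c0 : 'I_n, ~ ffree c0 (psi j))) => Hex.
  - have Hcj := cP j Hex.
    have HcB : caseB j = true.
      rewrite /caseB; apply/andP; split; first exact/b2P.
      by apply/negP => /b2P.
    have Hdj : data b (Ordinal Hj, proj (c j) t) = data b' (Ordinal Hj, proj (c j) t) by rewrite Hd.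
    rewrite !ffunE /= HcB /= in Hdj.
    have Eb : forall bb, sat (env t bb) (psi j) <-> sat (env (ext (c j) (proj (c j) t)) bb) (psi j).
      move=> bb; apply: sat_ext => i Hi; have Hi1 := Hfj i Hi.
      rewrite /env; case: ifP => // Hin.
      rewrite ext_proj //; apply/negP => /eqP E.
      by apply: Hcj; rewrite -E inordK.
    rewrite Eb (b2_iff _ _ Hdj) -Eb; done.
  - have Hall : forall c0 : 'I_n, ffree c0 (psi j).
      by move=> c0; apply: NNPP => H; apply: Hex; exists c0.
    case: (Hl j Hj) => -[[s [Hs Hsub]]|[i1 [i2 Hpsi]]] _.
      exfalso; have : n.+1 <= size s.
        have Hsz := @uniq_leq_size _ (iota 0 n.+1) s (iota_uniq 0 n.+1); rewrite size_iota in Hsz; apply: Hsz => i.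
        rewrite mem_iota add0n => /andP [_ Hi]; apply: Hsub.
        move: Hi; rewrite ltnS leq_eqVlt => /orP [/eqP ->|Hi] //.
        exact: (Hall (Ordinal Hi)).
      by rewrite ltnNge Hs.
    have H0 := Hall ord0; rewrite /psi Hpsi /= in H0 Hn.
    rewrite /psi Hpsi /=.
    have Hne : forall bb, PN bb -> env t bb i1 <> env t bb i2.
      move=> bb Hbb.
      have Evn : env t bb n = bb by rewrite /env ltnn.
      case: H0 => E0; case: Hn => En; subst.
      - by [].
      - by rewrite Evn; apply: PnotQ.
      - by rewrite Evn => E; apply: (PnotQ t 0 (ltn0Sn _) bb Hbb); exact: esym E.
      - by [].
    split=> E; exfalso; [exact: (Hne b Hb E) | exact: (Hne b' Hb' E)].
pose bS := fun S => proj1_sig (constructive_indefinite_description _ (all_tr S)).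
have bSP : forall S, PN (bS S) /\ trace (bS S) = S :=
  fun S => proj2_sig (constructive_indefinite_description _ (all_tr S)).
have finj : injective (fun S => data (bS S)).
  move=> S S' /= H; case: (bSP S) => H1 <-; case: (bSP S') => H2 <-; exact: key.
have := leq_card _ finj; rewrite /X !card_ffun !card_prod !card_ffun !card_ord card_bool.
rewrite leq_exp2l // expnS leq_pmul2r ?expn_gt0 //.
by rewrite /k ltnn.
Qed.

End Counting.

Section Inj.
Variables (M : Type) (Hinf : infinite_type M).
Definition fresh (s : seq M) : M := proj1_sig (constructive_indefinite_description _ (Hinf s)).
Lemma freshP s k : k < size s -> nth (fresh s) s k <> fresh s.
Proof. exact: (proj2_sig (constructive_indefinite_description _ (Hinf s)) k). Qed.
Fixpoint pre n := match n with 0 => [::] | n'.+1 => rcons (pre n') (fresh (pre n')) end.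
Definition emb n := fresh (pre n).
Lemma size_pre n : size (pre n) = n.
Proof. by elim: n => //= n IH; rewrite size_rcons IH. Qed.
Lemma nth_pre n i x : i < n -> nth x (pre n) i = emb i.
Proof.
elim: n => // n IH Hi /=; rewrite nth_rcons size_pre.
case: (ltngtP i n) => H.
- exact: IH.
- by rewrite ltnS leqNgt H in Hi.
- by rewrite H.
Qed.
Lemma emb_inj : injective emb.
Proof.
have H : forall i j, i < j -> emb i <> emb j.
  move=> i j Hij; rewrite -(nth_pre (emb j) Hij) /emb; apply: freshP; by rewrite size_pre.
move=> i j E; case: (ltngtP i j) => // Hc; [case: (H _ _ Hc E) | case: (H _ _ Hc (esym E))].
Qed.
End Inj.

Definition E1 : language := {| func := void; rel := option (option nat);
  farity := fun v => match v with end;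
  rarity := fun r => match r with Some (Some n) => n.+1 | _ => 1 end |}.

Section Forms.
Variable L : language.
Local Notation L1 := (Lsum L E1).

Definition Pf (v : nat) : form L1 := @frel L1 (inr None) (fun _ => var v).
Definition Qf (v : nat) : form L1 := @frel L1 (inr (Some None)) (fun _ => var v).
Definition Rf n (h : nat -> nat) : form L1 := @frel L1 (inr (Some (Some n))) (fun k => var (h k)).

Definition PN (N : structure L1) (x : N) : Prop := @rint _ N (inr None) (fun _ => x).
Definition QN (N : structure L1) (x : N) : Prop := @rint _ N (inr (Some None)) (fun _ => x).
Definition RN (N : structure L1) n (args : 'I_n.+1 -> N) : Prop := @rint _ N (inr (Some (Some n))) args.
Arguments RN {N n} args.
Definition tupn (T : Type) n (gz : nat -> T) (y : T) : 'I_n.+1 -> T := fun k => if nat_of_ord k < n then gz k else y.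
Arguments tupn {T} n gz y k.

Definition S1 k : form L1 :=
  iter k (@fex _) (fand (distinct _ k) (conjs [seq fand (Qf i) (fnot (Pf i)) | i <- iota 0 k])).
Definition S2 : form L1 := fex (Pf 0).
Definition S3 n : form L1 :=
  iter n (@fall _) (fimp (conjs [seq Qf i | i <- iota 0 n])
   (fall (fimp (Pf 0) (fex (fand (Pf 0)
     (iter n (@fall _) (fiff (Rf n id)
        (fnot (fiff (Rf n (fun k => if k < n then k else n.+1))
                    (conjs [seq feq (var i) (var (n.+2 + i)) | i <- iota 0 n])))))))))).

Definition S3prop (N : structure L1) n := forall gx : nat -> N, (forall i, i < n -> QN (gx i)) -> forall y, PN y ->
  exists y', PN y' /\ forall gz, (RN (tupn n gz y') <-> ~ (RN (tupn n gz y) <-> forall i, i < n -> gz i = gx i)).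

Lemma sat_fiff (M : structure L1) (e : nat -> M) a b : sat e (fiff a b) <-> (sat e a <-> sat e b).
Proof. by []. Qed.
Lemma sat_fnot (M : structure L1) (e : nat -> M) a : sat e (fnot a) <-> ~ sat e a.
Proof. by []. Qed.

Lemma sat_S1 (N : structure L1) (e : nat -> N) k : sat e (S1 k) <->
  exists g : nat -> N, (forall a b, a < k -> b < k -> a != b -> g a <> g b) /\ forall i, i < k -> QN (g i) /\ ~ PN (g i).
Proof.
rewrite /S1 sat_iter_ex; split; case=> g [Hd Hc]; exists g; split.
- move=> a b Ha Hb; rewrite -(envapp_lt g e Ha) -(envapp_lt g e Hb); move: a b Ha Hb; exact/sat_distinct.
- move=> i Hi; have := proj1 (sat_conjs _ _ _) Hc i; rewrite mem_iota /= envapp_lt //; apply; by [].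
- apply/sat_distinct => a b Ha Hb; rewrite (envapp_lt g e Ha) (envapp_lt g e Hb); exact: Hd.
- apply/sat_conjs => i; rewrite mem_iota /= => Hi; rewrite envapp_lt //; exact: Hc.
Qed.

Lemma sat_S2 (N : structure L1) (e : nat -> N) : sat e S2 <-> exists y : N, PN y.
Proof. by []. Qed.

Lemma sat_S3 (N : structure L1) (e : nat -> N) n : sat e (S3 n) <-> S3prop N n.
Proof.
rewrite /S3 sat_iter_all.
have HC : forall gx, sat (envapp n gx e) (conjs [seq Qf i | i <- iota 0 n]) <-> forall i, i < n -> QN (gx i).
  move=> gx; rewrite sat_conjs; split=> H i.
  - move=> Hi; have := H i; rewrite mem_iota /= envapp_lt //; apply; by [].
  - rewrite mem_iota /= => Hi; rewrite envapp_lt //; exact: H.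
have HI : forall gx y y' gz,
  let env4 := envapp n gz (scons y' (scons y (envapp n gx e))) in
  sat env4 (fiff (Rf n id) (fnot (fiff (Rf n (fun k => if k < n then k else n.+1))
                    (conjs [seq feq (var i) (var (n.+2 + i)) | i <- iota 0 n]))))
  <-> (RN (tupn n gz y') <-> ~ (RN (tupn n gz y) <-> forall i, i < n -> gz i = gx i)).
  move=> gx y y' gz env4.
  have E1 : sat env4 (Rf n id) = RN (tupn n gz y').
    change (RN (n:=n) (fun k => env4 k) = RN (tupn n gz y')); congr RN.
    apply: functional_extensionality => k; rewrite /tupn /env4; case: ifP => Hk.
    - by rewrite envapp_lt.
    - have -> : val k = n + 0 by apply/eqP; rewrite addn0 eqn_leq -ltnS ltn_ord leqNgt Hk.
      by rewrite envapp_ge.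
  have E2 : sat env4 (Rf n (fun k => if k < n then k else n.+1)) = RN (tupn n gz y).
    change (RN (n:=n) (fun k => env4 (if val k < n then val k else n.+1)) = RN (tupn n gz y)); congr RN.
    apply: functional_extensionality => k; rewrite /tupn /env4; case: ifP => Hk.
    - by rewrite envapp_lt.
    - by rewrite -addn1 envapp_ge.
  have E3 : sat env4 (conjs [seq feq (var i) (var (n.+2 + i)) | i <- iota 0 n]) <-> forall i, i < n -> gz i = gx i.
    rewrite sat_conjs; split=> H i.
    - move=> Hi; have := H i; rewrite mem_iota /= => /(_ Hi).
      by rewrite /env4 envapp_lt // addSnnS addSnnS envapp_ge /= envapp_lt.
    - rewrite mem_iota /= => Hi.
      by rewrite /env4 envapp_lt // addSnnS addSnnS envapp_ge /= envapp_lt //; apply: H.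
  by rewrite sat_fiff sat_fnot sat_fiff E1 E2 E3.
split.
- move=> H gx HQ y Hy.
  have H1 := H gx; change (sat (envapp n gx e) (conjs [seq Qf i | i <- iota 0 n]) ->
     forall y, PN y -> exists y', PN y' /\ sat (scons y' (scons y (envapp n gx e))) (iter n (@fall _) (fiff (Rf n id)
        (fnot (fiff (Rf n (fun k => if k < n then k else n.+1))
                    (conjs [seq feq (var i) (var (n.+2 + i)) | i <- iota 0 n])))))) in H1.
  case: (H1 (proj2 (HC gx) HQ) y Hy) => y' [Hy' H2]; exists y'; split=> // gz.
  by apply/(HI gx y y' gz); apply: (proj1 (sat_iter_all _ _ _) H2).
- move=> H gx; change (sat (envapp n gx e) (conjs [seq Qf i | i <- iota 0 n]) ->
     forall y, PN y -> exists y', PN y' /\ sat (scons y' (scons y (envapp n gx e))) (iter n (@fall _) (fiff (Rf n id)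
        (fnot (fiff (Rf n (fun k => if k < n then k else n.+1))
                    (conjs [seq feq (var i) (var (n.+2 + i)) | i <- iota 0 n])))))).
  move=> /HC HQ y Hy; case: (H gx HQ y Hy) => y' [Hy' H2]; exists y'; split=> //.
  apply/sat_iter_all => gz; apply/(HI gx y y' gz); exact: H2.
Qed.

End Forms.
Arguments tupn {T} n gz y k.
Arguments RN {L N n} args.

Section Bound.
Variable L : language.
Definition fbound k (p : form L) := forall i, ffree i p -> i < k.

Lemma fb_sentence p : fbound 0 p -> sentence p.
Proof. by move=> H i /H. Qed.
Lemma fb_imp k a b : fbound k a -> fbound k b -> fbound k (fimp a b).
Proof. move=> Ha Hb i [/Ha|/Hb] //. Qed.
Lemma fb_and k a b : fbound k a -> fbound k b -> fbound k (fand a b).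
Proof. move=> Ha Hb i [/Ha|/Hb] //. Qed.
Lemma fb_fiff k a b : fbound k a -> fbound k b -> fbound k (fiff a b).
Proof. by move=> Ha Hb; apply: fb_and; apply: fb_imp. Qed.
Lemma fb_fnot k a : fbound k a -> fbound k (fnot a).
Proof. move=> Ha; apply: fb_imp => // i []. Qed.
Lemma fb_all k a : fbound k.+1 a -> fbound k (fall a).
Proof. by move=> H i /H. Qed.
Lemma fb_ex k a : fbound k.+1 a -> fbound k (fex a).
Proof. by move=> H i /H. Qed.
Lemma fb_iter_all n k a : fbound (k + n) a -> fbound k (iter n (@fall L) a).
Proof. by move=> H i /ffree_iter_all /H; rewrite ltn_add2r. Qed.
Lemma fb_iter_ex n k a : fbound (k + n) a -> fbound k (iter n (@fex L) a).
Proof. by move=> H i /ffree_iter_ex /H; rewrite ltn_add2r. Qed.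
Lemma fb_conjs (T : eqType) (s : seq T) f k : (forall x, x \in s -> fbound k (f x)) -> fbound k (conjs (map f s)).
Proof. by move=> H i /ffree_conjs [x Hx /(H x Hx)]. Qed.
Lemma fb_feq k i j : i < k -> j < k -> fbound k (feq (var i) (var j)).
Proof. by move=> Hi Hj x [->|->]. Qed.
Lemma fb_distinct k : fbound k (distinct L k).
Proof. move=> i; exact: ffree_distinct. Qed.
End Bound.

Lemma fb_Pf L k v : v < k -> fbound k (Pf L v).
Proof. by move=> Hv i [_ ->]. Qed.
Lemma fb_Qf L k v : v < k -> fbound k (Qf L v).
Proof. by move=> Hv i [_ ->]. Qed.
Lemma fb_Rf L k n (h : nat -> nat) : (forall x : 'I_n.+1, h x < k) -> fbound k (Rf L n h).
Proof. by move=> H i [x ->]. Qed.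

Lemma sentence_S1 L k : sentence (S1 L k).
Proof.
apply: fb_sentence; apply: fb_iter_ex; apply: fb_and; first exact: fb_distinct.
apply: fb_conjs => x; rewrite mem_iota => /andP [_ Hx]; apply: fb_and; first exact: fb_Qf.
by apply: fb_fnot; apply: fb_Pf.
Qed.

Lemma sentence_S2 L : sentence (S2 L).
Proof. by apply: fb_sentence; apply: fb_ex; apply: fb_Pf. Qed.

Lemma sentence_S3 L n : sentence (S3 L n).
Proof.
apply: fb_sentence; apply: fb_iter_all; apply: fb_imp.
  by apply: fb_conjs => x; rewrite mem_iota => /andP [_ Hx]; apply: fb_Qf.
apply: fb_all; apply: fb_imp; first by apply: fb_Pf.
apply: fb_ex; apply: fb_and; first by apply: fb_Pf.
apply: fb_iter_all; apply: fb_fiff.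
  by apply: fb_Rf => x /=; have := ltn_ord x; lia.
apply: fb_fnot; apply: fb_fiff.
  by apply: fb_Rf => x /=; case: ifP => H; lia.
apply: fb_conjs => x; rewrite mem_iota => /andP [_ Hx]; apply: fb_feq; lia.
Qed.

Lemma xor_iff (a b : bool) : a (+) b <-> ~ (a <-> b).
Proof.
case: a; case: b => /=; split=> H //; try tauto.
all: try by case: H.
all: try (by exfalso; apply: H; split).
- by case=> H1 _; have := H1 isT.
- by case=> _ H2; have := H2 isT.
Qed.

Section Mp.
Variables (L : language) (M : structure L) (emb : nat -> M) (emb_inj : injective emb).

Definition decD (j : nat) : seq (seq nat) := odflt [::] (unpickle j : option (seq (seq nat))).
Lemma decD_pickle D : decD (pickle D) = D.
Proof. by rewrite /decD pickleK. Qed.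

Definition Rm n (args : 'I_n.+1 -> M) : Prop := exists zs : seq nat, exists j,
  [/\ size zs = n, forall i, i < n -> args (inord i) = emb (2 * nth 0 zs i),
      args (inord n) = emb (2 * j).+1 & zs \in decD j].

Definition rE1 (r : Defs.rel E1) : ('I_(rarity r) -> M) -> Prop :=
  match r as r0 return ('I_(@rarity E1 r0) -> M) -> Prop with
  | None => fun args => exists j, args ord0 = emb (2 * j).+1
  | Some None => fun args => exists j, args ord0 = emb (2 * j)
  | Some (Some n) => fun args => Rm args
  end.

Definition Mp := expand (E := E1) (N := M) (fun g => match g with end) rE1.

Lemma Rm_tup (n : nat) (gz : nat -> M) (j : nat) : Rm (tupn n gz (emb (2 * j).+1)) <->
  exists zs, [/\ size zs = n, forall i, i < n -> gz i = emb (2 * nth 0 zs i) & zs \in decD j].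
Proof.
have Ei : forall i, i < n -> tupn n gz (emb (2 * j).+1) (inord i) = gz i.
  by move=> i Hi; rewrite /tupn inordK; [rewrite Hi | apply: ltnW].

have En : tupn n gz (emb (2 * j).+1) (inord n) = emb (2 * j).+1.
  by rewrite /tupn inordK // ltnn.
split.
- case=> zs [j' [Hs Hz Hj Hm]]; exists zs; split=> //.
  + by move=> i Hi; rewrite -Ei // Hz.
  + rewrite En in Hj; have := emb_inj Hj => E.
    have -> : j = j' by lia.
    done.
- case=> zs [Hs Hz Hm]; exists zs, j; split=> //.
  by move=> i Hi; rewrite Ei // Hz.
Qed.

Lemma Mp_S1 k (e : nat -> Mp) : sat e (S1 L k).
Proof.
apply/sat_S1; exists (fun i => emb (2 * i)); split.
- move=> a b Ha Hb Hab /emb_inj E; move/eqP: Hab; apply; lia.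
- move=> i Hi; split; first by exists i.
  by case=> j /emb_inj E; lia.
Qed.

Lemma Mp_S2 (e : nat -> Mp) : sat e (S2 L).
Proof. by apply/sat_S2; exists (emb 1), 0. Qed.

Lemma Mp_S3 n (e : nat -> Mp) : sat e (S3 L n).
Proof.
apply/sat_S3 => gx HQ y [jy Ey].
have HQ' : forall i, exists j, i < n -> gx i = emb (2 * j).
  move=> i; case: (ltnP i n) => Hi; last by exists 0.
  by case: (HQ i Hi) => j Ej; exists j.
pose xs := fun i => proj1_sig (constructive_indefinite_description _ (HQ' i)).
have xsP : forall i, i < n -> gx i = emb (2 * xs i) :=
  fun i => proj2_sig (constructive_indefinite_description _ (HQ' i)).
pose zs0 := [seq xs i | i <- iota 0 n].
have Hzs0 : size zs0 = n by rewrite size_map size_iota.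
have nth_zs0 : forall i, i < n -> nth 0 zs0 i = xs i.
  by move=> i Hi; rewrite (nth_map 0) ?size_iota // nth_iota.
pose D := decD jy.
pose D' := if zs0 \in D then [seq z <- D | z != zs0] else zs0 :: D.
have memD' : forall zs, (zs \in D') = (zs \in D) (+) (zs == zs0).
  move=> zs; rewrite /D'; case: ifP => H0; [rewrite mem_filter | rewrite in_cons];
  (have [E|Hne] := eqVneq zs zs0; [rewrite E; rewrite ?eqxx ?H0 /= ?addbT // | rewrite /= ?addbF //]).
exists (emb (2 * pickle D').+1); split; first by exists (pickle D').
move=> gz.
change (Rm (tupn n gz (emb (2 * pickle D').+1)) <-> ~ (Rm (tupn n gz y) <-> forall i, i < n -> gz i = gx i)).
rewrite Ey !Rm_tup decD_pickle -/D.
have uniq_zs : forall zs zs', size zs = n -> size zs' = n ->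
    (forall i, i < n -> emb (2 * nth 0 zs i) = emb (2 * nth 0 zs' i)) -> zs = zs'.
  move=> zs zs' H1 H2 H; apply: (@eq_from_nth _ 0); first by rewrite H1 H2.
  move=> i; rewrite H1 => Hi; have := emb_inj (H i Hi); lia.
case: (classic (exists zs, size zs = n /\ forall i, i < n -> gz i = emb (2 * nth 0 zs i))) => [[zs [Hsz Hz]]|Hno].
- have Hc : forall D0, (exists zs', [/\ size zs' = n, forall i, i < n -> gz i = emb (2 * nth 0 zs' i) & zs' \in D0]) <-> zs \in D0.
    move=> D0; split.
    + case=> zs' [H1 H2 H3]; suff -> : zs = zs' by [].
      by apply: uniq_zs => // i Hi; rewrite -Hz // H2.
    + by move=> H; exists zs.
  rewrite !Hc.
  have Heq : (forall i, i < n -> gz i = gx i) <-> zs == zs0.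
    split.
    + move=> H; apply/eqP; apply: uniq_zs => // i Hi; rewrite -Hz // H // xsP // nth_zs0 //.
    + move/eqP=> E i Hi; by rewrite Hz // E nth_zs0 // -xsP.
  rewrite Heq memD'.
  exact: xor_iff.
- split.
  + by case=> zs [H1 H2 _]; exfalso; apply: Hno; exists zs.
  + move=> H; exfalso; apply: H; split.
    * by case=> zs [H1 H2 _]; exfalso; apply: Hno; exists zs.
    * move=> H; exfalso; apply: Hno; exists zs0; split=> // i Hi; by rewrite H // xsP // nth_zs0.
Qed.

End Mp.

Lemma dir2 (L : language) (T : theory L) (HT : complete T) (M : structure L) :
  models M T -> infinite_type M ->
  exists (E : language) (T' : theory (Lsum L E)), expansion T T' /\ ~ aritizable T'.
Proof.
move=> HM Hinf.
have einj := @emb_inj _ Hinf.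
pose X := Mp (M := M) (emb Hinf).
exists E1, (Th X); split.
- split; first exact: Th_complete.
  move=> p Hp Y HY e; apply: (HY (ftr E1 p)); split.
  + apply: sentence_ftr; case: HT => H _ _; exact: H.
  + move=> e'; apply/sat_expand; exact: HM.
- move=> [n [Hn [E' [T'' [[HT''c HT''sub] Hnary]]]]].
  case: HT''c => _ [N'' HN''] _.
  pose N1 := reduct N''.
  have HN1 : forall phi, sentence phi -> (forall e : nat -> X, sat e phi) -> forall e : nat -> N1, sat e phi.
    move=> phi Hs Hphi e; apply/sat_reduct; exact: (HT''sub phi (conj Hs Hphi) N'' HN'' e).
  case: (dom_inh N'') => x0.
  case: n Hn Hnary => // n' _ Hnary.
  pose p := @frel (Lsum (Lsum L E1) E') (inl (inr (Some (Some n'.+1)))) (fun k => var k).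
  case: (Hnary p) => q [Hbq Hfq Heq].
  apply: (@counting _ N'' n' (PN (N:=N1)) (QN (N:=N1)) (RN (N:=N1) (n:=n'.+1)) _ _ _ p q).
  + move=> k; apply: (proj1 (sat_S1 (N := N1) (fun _ => x0) k)).
    exact: (HN1 _ (@sentence_S1 _ k) (Mp_S1 einj k) (fun=> x0)).
  + apply: (proj1 (sat_S2 (N := N1) (fun _ => x0))).
    exact: (HN1 _ (@sentence_S2 _) (@Mp_S2 _ M (emb Hinf)) (fun=> x0)).
  + apply: (proj1 (sat_S3 (N := N1) (fun _ => x0) n'.+1)).
    exact: (HN1 _ (@sentence_S3 _ _) (Mp_S3 einj n'.+1) (fun _ => x0)).
  + by move=> e.
  + by move=> i [k ->]; exact: ltn_ord.
  + exact: Hbq.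
  + exact: Hfq.
  + move=> e; exact: (Heq N'' HN'' e).
Qed.

Theorem proposition3p9 (L : language) (T : theory L) (HT : complete T) :
  (exists (E : language) (T' : theory (Lsum L E)),
      expansion T T' /\ ~ aritizable T')
  <-> (exists M : structure L, models M T /\ infinite_type M).
Proof.
split.
- case=> E [T' [H1 H2]]; exact: (dir1 HT H1 H2).
- case=> M [HM Hinf]; exact: (dir2 HT HM Hinf).
Qed.
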